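(* Let $A$ be a pure hyperbolic isometry and $B$ a pure parabolic isometry of $\mathbb{H}^4$ such that $\mathrm{fix}(A)\cap\mathrm{fix}(B)=\emptyset$. Then $A$ and $B$ are linked.
   Context: A pure hyperbolic isometry is a composition of reflections in two ultra-parallel hyperplanes. A pure parabolic isometry is a composition of reflections in two hyperplanes tangent at a unique point at infinity. $\mathrm{fix}(\cdot)$ denotes the set of fixed points in $\mathbb{H}^4\cup\partial\mathbb{H}^4$. Two isometries $A,B$ are linked if there are involutions $\alpha,\beta,\gamma$ of $\mathbb{H}^4$ with $A=\alpha\beta$ and $B=\beta\gamma$. *)

(* Defs.v *)
(* Hyperboloid model of H^4 in R^{4,1}: column vectors 'cV_5,
   coordinate 0 is the time coordinate, Lorentz form -x0 y0 + x1 y1 + ... + x4 y4.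
   Isometries of H^4 = O^+(4,1), acting by x |-> M *m x (so matrix product is
   composition of maps). *)
From HB Require Import structures.
From mathcomp Require Import all_boot all_order all_algebra.
From mathcomp Require Import reals.
Set Implicit Arguments. Unset Strict Implicit. Unset Printing Implicit Defensive.
Import Order.TTheory GRing.Theory Num.Theory.
Local Open Scope ring_scope.

Section H4.
Variable R : realType.

Definition LJ : 'M[R]_5 := diag_mx (\row_(i < 5) (if i == ord0 then -1 else 1)).

Definition lform (x y : 'cV[R]_5) : R := (x^T *m LJ *m y) ord0 ord0.

Definition hpoint (x : 'cV[R]_5) : Prop := lform x x = -1 /\ 0 < x ord0 ord0.

(* representatives of points of the boundary dH^4: future-pointing nonzero null
   vectors; two represent the same ideal point iff positively proportional *)
Definition ideal (v : 'cV[R]_5) : Prop := lform v v = 0 /\ 0 < v ord0 ord0.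
Definition same_ideal (v w : 'cV[R]_5) : Prop := exists l : R, 0 < l /\ w = l *: v.

Definition isometry (M : 'M[R]_5) : Prop := M^T *m LJ *m M = LJ /\ 0 < M ord0 ord0.

Definition involution (M : 'M[R]_5) : Prop := isometry M /\ M *m M = 1%:M /\ M <> 1%:M.

Definition spacelike (e : 'cV[R]_5) : Prop := 0 < lform e e.
Definition on_hplane (e x : 'cV[R]_5) : Prop := lform x e = 0.

(* reflection in the hyperplane with normal e: x |-> x - 2<x,e>/<e,e> e *)
Definition refl (e : 'cV[R]_5) : 'M[R]_5 :=
  1%:M - (2 / lform e e) *: (e *m e^T *m LJ).

Definition ultraparallel (e f : 'cV[R]_5) : Prop :=
  spacelike e /\ spacelike f /\
  ~ (exists x, hpoint x /\ on_hplane e x /\ on_hplane f x) /\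
  ~ (exists v, ideal v /\ on_hplane e v /\ on_hplane f v).

Definition tangent_at_infinity (e f : 'cV[R]_5) : Prop :=
  spacelike e /\ spacelike f /\
  ~ (exists x, hpoint x /\ on_hplane e x /\ on_hplane f x) /\
  exists v, ideal v /\ on_hplane e v /\ on_hplane f v /\
    forall w, ideal w -> on_hplane e w -> on_hplane f w -> same_ideal v w.

Definition pure_hyperbolic (A : 'M[R]_5) : Prop :=
  exists e f, ultraparallel e f /\ A = refl e *m refl f.

Definition pure_parabolic (A : 'M[R]_5) : Prop :=
  exists e f, tangent_at_infinity e f /\ A = refl e *m refl f.

Definition fixes_point (M : 'M[R]_5) (x : 'cV[R]_5) : Prop := M *m x = x.
Definition fixes_ideal (M : 'M[R]_5) (v : 'cV[R]_5) : Prop := same_ideal v (M *m v).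

Definition fix_disjoint (A B : 'M[R]_5) : Prop :=
  ~ (exists x, hpoint x /\ fixes_point A x /\ fixes_point B x) /\
  ~ (exists v, ideal v /\ fixes_ideal A v /\ fixes_ideal B v).

Definition linked (A B : 'M[R]_5) : Prop :=
  exists a b c, involution a /\ involution b /\ involution c /\
    A = a *m b /\ B = b *m c.

End H4.

(* Main.v *)
Require Import Defs.
From HB Require Import structures.
From mathcomp Require Import all_boot all_order all_algebra.
From mathcomp Require Import reals.
From mathcomp Require Import ring lra.
Set Implicit Arguments. Unset Strict Implicit. Unset Printing Implicit Defensive.
Import Order.TTheory GRing.Theory Num.Theory.
Local Open Scope ring_scope.

Section L.
Variable R : realType.
Implicit Types x y z e f t u w v g h : 'cV[R]_5.

Notation i1 := (@Ordinal 5 1 isT).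
Notation i2 := (@Ordinal 5 2 isT).
Notation i3 := (@Ordinal 5 3 isT).
Notation i4 := (@Ordinal 5 4 isT).

Lemma lform_sum x y : lform x y =
  \sum_(i < 5) (if i == ord0 then -1 else 1) * x i ord0 * y i ord0.
Proof.
rewrite /lform /LJ mul_mx_diag !mxE; apply: eq_bigr => i _; rewrite !mxE; ring.
Qed.

Lemma lform_coord x y : lform x y =
  - (x ord0 ord0 * y ord0 ord0) + x i1 ord0 * y i1 ord0 + x i2 ord0 * y i2 ord0
  + x i3 ord0 * y i3 ord0 + x i4 ord0 * y i4 ord0.
Proof.
rewrite lform_sum !big_ord_recl big_ord0 /=.
have -> : lift ord0 ord0 = i1 :> 'I_5 by apply: val_inj.
have -> : lift ord0 (lift ord0 ord0) = i2 :> 'I_5 by apply: val_inj.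
have -> : lift ord0 (lift ord0 (lift ord0 ord0)) = i3 :> 'I_5 by apply: val_inj.
have -> : lift ord0 (lift ord0 (lift ord0 (lift ord0 ord0))) = i4 :> 'I_5 by apply: val_inj.
ring.
Qed.

Lemma lformC x y : lform x y = lform y x.
Proof. rewrite !lform_sum; apply: eq_bigr => i _; ring. Qed.
Lemma lformDl x y z : lform (x + y) z = lform x z + lform y z.
Proof. rewrite !lform_sum -big_split; apply: eq_bigr => i _; rewrite !mxE /=; ring. Qed.
Lemma lformDr x y z : lform z (x + y) = lform z x + lform z y.
Proof. by rewrite lformC lformDl !(lformC z). Qed.
Lemma lformZl (a : R) x y : lform (a *: x) y = a * lform x y.
Proof. rewrite !lform_sum mulr_sumr; apply: eq_bigr => i _; rewrite !mxE; ring. Qed.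
Lemma lformZr (a : R) x y : lform y (a *: x) = a * lform y x.
Proof. by rewrite lformC lformZl lformC. Qed.
Lemma lformNl x y : lform (- x) y = - lform x y.
Proof. by rewrite -scaleN1r lformZl mulN1r. Qed.
Lemma lformNr x y : lform y (- x) = - lform y x.
Proof. by rewrite -scaleN1r lformZr mulN1r. Qed.
Lemma lformBl x y z : lform (x - y) z = lform x z - lform y z.
Proof. by rewrite lformDl lformNl. Qed.
Lemma lformBr x y z : lform z (x - y) = lform z x - lform z y.
Proof. by rewrite lformDr lformNr. Qed.
Lemma lform0l x : lform 0 x = 0.
Proof. by rewrite -(scale0r 0) lformZl mul0r. Qed.
Lemma lform0r x : lform x 0 = 0.
Proof. by rewrite lformC lform0l. Qed.

Definition lformE := (lformDl, lformDr, lformZl, lformZr, lformNl, lformNr, lformBl, lformBr, lform0l, lform0r).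

Lemma lform_mx x y : x^T *m LJ R *m y = (lform x y)%:M.
Proof. by rewrite [LHS]mx11_scalar. Qed.

Lemma reflE e y : refl e *m y = y - (2 * lform e y / lform e e) *: e.
Proof.
rewrite /refl mulmxBl mul1mx -scalemxAl -!mulmxA (mulmxA e^T) lform_mx.
by rewrite mul_mx_scalar scalerA mulrAC.
Qed.

Lemma mx_ext (M N : 'M[R]_5) : (forall y : 'cV[R]_5, M *m y = N *m y) -> M = N.
Proof.
move=> H; apply/matrixP => i j.
have := congr1 (fun v : 'cV[R]_5 => v i ord0) (H (delta_mx j ord0)).
by rewrite -!colE !mxE.
Qed.

Lemma entry_form (K : 'M[R]_5) i j :
  ((delta_mx i (ord0 : 'I_1))^T *m K *m delta_mx j (ord0 : 'I_1)) ord0 ord0 = K i j.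
Proof. by rewrite trmx_delta -rowE -colE !mxE. Qed.

Definition fpres (M : 'M[R]_5) := M^T *m LJ R *m M = LJ R.

Lemma lform_M (M : 'M[R]_5) y z :
  lform (M *m y) (M *m z) = (y^T *m (M^T *m LJ R *m M) *m z) ord0 ord0.
Proof. by rewrite /lform trmx_mul !mulmxA. Qed.

Lemma fpres_lform (M : 'M[R]_5) y z : fpres M -> lform (M *m y) (M *m z) = lform y z.
Proof. by move=> H; rewrite lform_M H. Qed.

Lemma fpresP (M : 'M[R]_5) :
  (forall y z, lform (M *m y) (M *m z) = lform y z) -> fpres M.
Proof.
move=> H; apply/matrixP => i j.
have := H (delta_mx i ord0) (delta_mx j ord0).
by rewrite lform_M /lform !entry_form.
Qed.

Lemma fpres_mul (M N : 'M[R]_5) : fpres M -> fpres N -> fpres (M *m N).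
Proof.
move=> HM HN; apply: fpresP => y z.
by rewrite -!mulmxA !fpres_lform.
Qed.

Lemma refl_act e y : lform e e != 0 ->
  lform (refl e *m y) (refl e *m y) = lform y y.
Proof. move=> H; rewrite !reflE !lformE (lformC y e); by field. Qed.

Lemma refl_fpres e : lform e e != 0 -> fpres (refl e).
Proof. move=> H; apply: fpresP => y z; rewrite !reflE !lformE !(lformC _ e). by field. Qed.

Lemma refl_sq e : lform e e != 0 -> refl e *m refl e = 1%:M.
Proof.
move=> H; apply: mx_ext => y; rewrite mul1mx -mulmxA !reflE !lformE.
apply/matrixP => i j; rewrite !mxE; by field.
Qed.

Lemma sum5 (F : 'I_5 -> R) : \sum_(i < 5) F i = F ord0 + F i1 + F i2 + F i3 + F i4.
Proof.
rewrite !big_ord_recl big_ord0 /=.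
have -> : lift ord0 ord0 = i1 :> 'I_5 by apply: val_inj.
have -> : lift ord0 (lift ord0 ord0) = i2 :> 'I_5 by apply: val_inj.
have -> : lift ord0 (lift ord0 (lift ord0 ord0)) = i3 :> 'I_5 by apply: val_inj.
have -> : lift ord0 (lift ord0 (lift ord0 (lift ord0 ord0))) = i4 :> 'I_5 by apply: val_inj.
by rewrite addr0 !addrA.
Qed.

Lemma CS4 (a1 a2 a3 a4 b1 b2 b3 b4 : R) :
  (a1*b1 + a2*b2 + a3*b3 + a4*b4)^+2 <=
  (a1^+2 + a2^+2 + a3^+2 + a4^+2) * (b1^+2 + b2^+2 + b3^+2 + b4^+2).
Proof.
rewrite -subr_ge0.
have -> : (a1^+2 + a2^+2 + a3^+2 + a4^+2) * (b1^+2 + b2^+2 + b3^+2 + b4^+2)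
  - (a1*b1 + a2*b2 + a3*b3 + a4*b4)^+2 =
  (a1*b2-a2*b1)^+2 + (a1*b3-a3*b1)^+2 + (a1*b4-a4*b1)^+2 + (a2*b3-a3*b2)^+2
  + (a2*b4-a4*b2)^+2 + (a3*b4-a4*b3)^+2 by ring.
by rewrite !addr_ge0 ?sqr_ge0.
Qed.

Lemma orth_timelike t z : lform t t < 0 -> lform z t = 0 ->
  0 <= lform z z /\ (lform z z = 0 -> z = 0).
Proof.
rewrite !lform_coord => Ht Hzt.
set t0 := t ord0 ord0 in Ht Hzt *; set t1 := t i1 ord0 in Ht Hzt *.
set t2 := t i2 ord0 in Ht Hzt *; set t3 := t i3 ord0 in Ht Hzt *.
set t4 := t i4 ord0 in Ht Hzt *.
set z0 := z ord0 ord0 in Hzt *; set z1 := z i1 ord0 in Hzt *.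
set z2 := z i2 ord0 in Hzt *; set z3 := z i3 ord0 in Hzt *.
set z4 := z i4 ord0 in Hzt *.
have CS := CS4 z1 z2 z3 z4 t1 t2 t3 t4.
set S := z1 * t1 + z2 * t2 + z3 * t3 + z4 * t4 in CS.
set Z := z1 ^+ 2 + z2 ^+ 2 + z3 ^+ 2 + z4 ^+ 2 in CS.
set T := t1 ^+ 2 + t2 ^+ 2 + t3 ^+ 2 + t4 ^+ 2 in CS.
have HS : S = z0 * t0 by rewrite /S; lra.
have HT : T < t0 ^+ 2 by rewrite /T; nra.
have T0 : 0 <= T by rewrite /T; nra.
have Z0 : 0 <= Z by rewrite /Z; nra.
have HZ : z0 ^+ 2 <= Z.
  rewrite HS in CS.
  have : z0^+2 * t0^+2 <= Z * t0^+2 by nra.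
  have : 0 < t0 ^+ 2 by lra.
  nra.
have EQ : - (z0 * z0) + z1 * z1 + z2 * z2 + z3 * z3 + z4 * z4 = Z - z0^+2 by rewrite /Z; ring.
rewrite EQ; split; first lra.
move=> H0.
have HZ0 : Z = 0.
  have : Z * (t0^+2 - T) <= 0 by rewrite HS in CS; nra.
  nra.
have : z1 = 0 /\ z2 = 0 /\ z3 = 0 /\ z4 = 0 by rewrite /Z in HZ0; nra.
move=> [h1 [h2 [h3 h4]]].
have h0 : z0 = 0 by nra.
apply/matrixP => i j; rewrite (ord1 j) !mxE.
case: i => [[|[|[|[|[|k]]]]] Hk] //.
- by rewrite -h0 /z0; congr (z _ _); apply: val_inj.
- by rewrite -h1 /z1; congr (z _ _); apply: val_inj.
- by rewrite -h2 /z2; congr (z _ _); apply: val_inj.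
- by rewrite -h3 /z3; congr (z _ _); apply: val_inj.
- by rewrite -h4 /z4; congr (z _ _); apply: val_inj.
Qed.

Definition d0 : 'cV[R]_5 := delta_mx ord0 ord0.

Lemma d0E i : d0 i ord0 = (i == ord0)%:R.
Proof. by rewrite /d0 mxE andbT. Qed.

Lemma lform_d0 x : lform d0 x = - x ord0 ord0.
Proof. rewrite lform_coord !d0E /=; ring. Qed.

Lemma M00E (M : 'M[R]_5) i : (M *m d0) i ord0 = M i ord0.
Proof. by rewrite /d0 -colE mxE. Qed.

Lemma fix_timelike_pos (M : 'M[R]_5) t : fpres M -> M *m t = t -> lform t t < 0 ->
  0 < M ord0 ord0.
Proof.
move=> HM Mt Ht.
have Hss : lform (M *m d0) (M *m d0) = -1 by rewrite fpres_lform // lform_d0 d0E.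
have Hst : lform (M *m d0) t = - t ord0 ord0 by rewrite -{1}Mt fpres_lform // lform_d0.
move: Hss Hst Ht; rewrite !lform_coord !M00E.
set s0 := M ord0 ord0; set s1 := M i1 ord0; set s2 := M i2 ord0.
set s3 := M i3 ord0; set s4 := M i4 ord0.
set t0 := t ord0 ord0; set t1 := t i1 ord0; set t2 := t i2 ord0.
set t3 := t i3 ord0; set t4 := t i4 ord0.
move=> Hss Hst Ht.
have CS := CS4 s1 s2 s3 s4 t1 t2 t3 t4.
set S := s1 * t1 + s2 * t2 + s3 * t3 + s4 * t4 in CS.
set A := s1 ^+ 2 + s2 ^+ 2 + s3 ^+ 2 + s4 ^+ 2 in CS.
set T := t1 ^+ 2 + t2 ^+ 2 + t3 ^+ 2 + t4 ^+ 2 in CS.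
have HS : S = (s0 - 1) * t0 by rewrite /S; lra.
have HA : A = s0^+2 - 1 by rewrite /A; lra.
have HT : T < t0 ^+ 2 by rewrite /T; nra.
have T0 : 0 <= T by rewrite /T; nra.
have A0 : 0 <= A by rewrite /A; nra.
rewrite HS HA in CS.
case: (ltrP 0 s0) => // Hs0.
have h1 : (s0 - 1) ^+ 2 * t0 ^+ 2 <= (s0 ^+ 2 - 1) * t0 ^+ 2.
  have h2 : (s0^+2 - 1) * T <= (s0^+2-1) * t0^+2 by apply: ler_wpM2l; lra.
  have h3 : ((s0-1)*t0)^+2 = (s0-1)^+2 * t0^+2 by ring.
  lra.
have : t0 ^+ 2 * (2 - 2 * s0) <= 0 by nra.
nra.
Qed.

Lemma LJ2 : LJ R *m LJ R = 1%:M.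
Proof.
rewrite /LJ mulmx_diag; apply/matrixP => i j; rewrite !mxE.
by case: (i == j); case: (i == ord0); rewrite ?mulr1n ?mulr0n //; ring.
Qed.

Lemma fpres_row (M : 'M[R]_5) : fpres M -> M *m LJ R *m M^T = LJ R.
Proof.
rewrite /fpres => H.
have H1 : (LJ R *m M^T *m LJ R) *m M = 1%:M by rewrite -!mulmxA (mulmxA M^T) H LJ2.
have := mulmx1C H1; rewrite !mulmxA => H2.
by rewrite -[LHS]mulmx1 -LJ2 mulmxA H2 mul1mx.
Qed.

Lemma isometry_mul (M N : 'M[R]_5) : Defs.isometry M -> Defs.isometry N -> Defs.isometry (M *m N).
Proof.
move=> [HM M0] [HN N0]; split; first exact: fpres_mul.
have Hn : lform (N *m d0) (N *m d0) = -1 by rewrite fpres_lform // lform_d0 d0E.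
pose r := (row ord0 M)^T.
have Hr : lform r r = -1.
  rewrite /lform /r trmxK rowE trmx_mul -!mulmxA (mulmxA M) (mulmxA (M *m LJ R)).
  by rewrite fpres_row // trmx_delta -rowE -colE !mxE.
have Hmn : (M *m N) ord0 ord0 = \sum_(i < 5) r i ord0 * (N *m d0) i ord0.
  by rewrite mxE; apply: eq_bigr => i _; rewrite M00E !mxE.
rewrite Hmn sum5; move: Hn Hr; rewrite !lform_coord !M00E /r !mxE.
set a0 := M ord0 ord0; set a1 := M ord0 i1; set a2 := M ord0 i2.
set a3 := M ord0 i3; set a4 := M ord0 i4.
set b0 := N ord0 ord0; set b1 := N i1 ord0; set b2 := N i2 ord0.
set b3 := N i3 ord0; set b4 := N i4 ord0.
move=> Hn Hr.
have CS := CS4 a1 a2 a3 a4 b1 b2 b3 b4.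
set S := a1 * b1 + a2 * b2 + a3 * b3 + a4 * b4 in CS.
set A := a1 ^+ 2 + a2 ^+ 2 + a3 ^+ 2 + a4 ^+ 2 in CS.
set B := b1 ^+ 2 + b2 ^+ 2 + b3 ^+ 2 + b4 ^+ 2 in CS.
have HA : A = a0^+2 - 1 by rewrite /A; lra.
have HB : B = b0^+2 - 1 by rewrite /B; lra.
have A0 : 0 <= A by rewrite /A; nra.
have B0 : 0 <= B by rewrite /B; nra.
rewrite HA HB in CS.
have E : a0 * b0 + a1 * b1 + a2 * b2 + a3 * b3 + a4 * b4 = a0 * b0 + S by rewrite /S; ring.
rewrite E.
have P : 0 < a0 * b0 by apply: mulr_gt0.
have : S ^+ 2 < (a0 * b0) ^+ 2 by nra.
nra.
Qed.

Lemma refl_iso e : spacelike e -> Defs.isometry (refl e).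
Proof.
rewrite /spacelike => He; have He' : lform e e != 0 by rewrite gt_eqF.
split; first exact: refl_fpres.
rewrite -M00E reflE (lformC e d0) lform_d0 !mxE eqxx /=.
have : 0 <= e ord0 ord0 ^+ 2 / lform e e by rewrite divr_ge0 // ?sqr_ge0 ?ltW.
have -> : 1 - 2 * - e ord0 ord0 / lform e e * e ord0 ord0 = 1 + 2 * (e ord0 ord0 ^+ 2 / lform e e) by field.
lra.
Qed.

Lemma comm_fix (M : 'M[R]_5) x : fpres M -> M *m x = x -> lform x x != 0 ->
  M *m refl x = refl x *m M.
Proof.
move=> HM Mx Hx; apply: mx_ext => y; rewrite -!mulmxA !reflE.
have H1 : lform x (M *m y) = lform x y by rewrite -{1}Mx fpres_lform.
by rewrite H1 mulmxBr -scalemxAr Mx.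
Qed.

Lemma comm_neg (M : 'M[R]_5) x : fpres M -> M *m x = - x -> lform x x != 0 ->
  M *m refl x = refl x *m M.
Proof.
move=> HM Mx Hx; apply: mx_ext => y; rewrite -!mulmxA !reflE.
have H1 : lform x (M *m y) = - lform x y.
  by rewrite -[x in LHS]opprK -Mx lformNl fpres_lform.
rewrite H1 mulmxBr -scalemxAr Mx; apply/matrixP => i j; rewrite !mxE; ring.
Qed.

Lemma three_refl_comm e f (a b : R) y :
  lform e e != 0 -> lform f f != 0 -> lform (a *: e + b *: f) (a *: e + b *: f) != 0 ->
  refl e *m (refl f *m (refl (a *: e + b *: f) *m y)) =
  refl (a *: e + b *: f) *m (refl f *m (refl e *m y)).
Proof.
move=> He Hf Hk; rewrite !reflE.
have Hfe : lform f e = lform e f by rewrite lformC.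
have Hye : lform y e = lform e y by rewrite lformC.
have Hyf : lform y f = lform f y by rewrite lformC.
move: Hk; rewrite !lformE ?Hfe ?Hye ?Hyf => Hk.
apply/matrixP => i j; rewrite !mxE.
field; by rewrite Hk Hf He.
Qed.

Ltac side := repeat (apply/andP; split); try assumption.

Lemma three_refl e f (a b : R) :
  lform e e != 0 -> lform f f != 0 -> lform (a *: e + b *: f) (a *: e + b *: f) != 0 ->
  let N := refl e *m refl f *m refl (a *: e + b *: f) in N *m N = 1%:M.
Proof.
move=> He Hf Hk N.
have E : N = refl (a *: e + b *: f) *m refl f *m refl e.
  by apply: mx_ext => y; rewrite /N -!mulmxA three_refl_comm.
rewrite {2}E /N -!mulmxA (mulmxA (refl (a *: e + b *: f))) refl_sq // mul1mx.
by rewrite (mulmxA (refl f)) refl_sq // mul1mx refl_sq.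
Qed.

Lemma coord0_neq t : lform t t < 0 -> t ord0 ord0 != 0.
Proof.
rewrite lform_coord => H; apply/eqP => t0; rewrite t0 in H; nra.
Qed.

Lemma hpoint_of t : lform t t < 0 -> exists x, hpoint x /\ exists k : R, x = k *: t.
Proof.
move=> Ht; have t0 := coord0_neq Ht.
set c := Num.sqrt (- lform t t).
have c0 : 0 < c by rewrite sqrtr_gt0 oppr_gt0.
have c2 : c ^+ 2 = - lform t t by rewrite sqr_sqrtr // oppr_ge0 ltW.
set sg : R := if 0 < t ord0 ord0 then 1 else -1.
have sg2 : sg ^+ 2 = 1 by rewrite /sg; case: ifP => _; ring.
have sgt : 0 < sg * t ord0 ord0.
  rewrite /sg; case: ifP => h; first by rewrite mul1r.
  rewrite mulN1r oppr_gt0 lt_neqAle t0 /=.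
  by rewrite leNgt h.
exists ((sg / c) *: t); split; last by exists (sg / c).
split.
- rewrite !lformE.
  have -> : sg / c * (sg / c * lform t t) = sg ^+ 2 * lform t t / c ^+ 2.
    by rewrite expr2 expr2; field; rewrite gt_eqF.
  rewrite sg2 c2; field; by rewrite lt_eqF.
- rewrite mxE mulrAC; apply: divr_gt0 => //.
Qed.

Lemma null_nonzero_coord u : lform u u = 0 -> u != 0 -> u ord0 ord0 != 0.
Proof.
rewrite lform_coord => Hu Hn; apply/eqP => h0; move/eqP: Hn; apply.
rewrite h0 in Hu.
have : u i1 ord0 = 0 /\ u i2 ord0 = 0 /\ u i3 ord0 = 0 /\ u i4 ord0 = 0 by nra.
move=> [h1 [h2 [h3 h4]]].
apply/matrixP => i j; rewrite (ord1 j) !mxE.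
case: i => [[|[|[|[|[|k]]]]] Hk] //.
- by rewrite -h0; congr (u _ _); apply: val_inj.
- by rewrite -h1; congr (u _ _); apply: val_inj.
- by rewrite -h2; congr (u _ _); apply: val_inj.
- by rewrite -h3; congr (u _ _); apply: val_inj.
- by rewrite -h4; congr (u _ _); apply: val_inj.
Qed.

Lemma ideal_of u : lform u u = 0 -> u != 0 -> exists s : R, s ^+ 2 = 1 /\ ideal (s *: u).
Proof.
move=> Hu Hn; have u0 := null_nonzero_coord Hu Hn.
exists (if 0 < u ord0 ord0 then 1 else -1); split.
  by case: ifP => _; ring.
split; first by rewrite !lformE Hu !mulr0.
rewrite mxE; case: ifP => h; first by rewrite mul1r.
by rewrite mulN1r oppr_gt0 lt_neqAle u0 /= leNgt h.
Qed.

(* projection of d0 onto span(e,f) when gram is positive definite *)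
Lemma gram_pos_timelike e f : 0 < lform e e ->
  0 < lform e e * lform f f - lform e f ^+ 2 ->
  exists t, lform t t < 0 /\ lform t e = 0 /\ lform t f = 0.
Proof.
move=> HE HD.
set E := lform e e in HE HD *; set F := lform e f in HD *; set H := lform f f in HD *.
set D := E * H - F ^+ 2 in HD *.
set ed := lform e d0; set fd := lform f d0.
set p := (H * ed - F * fd) / D; set q := (E * fd - F * ed) / D.
have D0 : D != 0 by rewrite gt_eqF.
have hp : p * E + q * F = ed by rewrite /p /q /D; field; rewrite -/D.
have hq : p * F + q * H = fd by rewrite /p /q /D; field; rewrite -/D.
exists (d0 - (p *: e + q *: f)).
have Hfe : lform f e = F by rewrite lformC.
have Hde : lform d0 e = ed by rewrite lformC.
have Hdf : lform d0 f = fd by rewrite lformC.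
have Hdd : lform d0 d0 = -1 by rewrite lform_d0 d0E.
rewrite !lformE Hfe Hde Hdf Hdd -/E -/F -/H (lformC e d0) (lformC f d0) -/ed -/fd.
split; last split.
- have Q : 0 <= p ^+ 2 * E + 2 * p * q * F + q ^+ 2 * H.
    have : 0 <= E * (p ^+ 2 * E + 2 * p * q * F + q ^+ 2 * H).
      have -> : E * (p ^+ 2 * E + 2 * p * q * F + q ^+ 2 * H) = (p * E + q * F) ^+ 2 + q ^+ 2 * D by rewrite /D; ring.
      by rewrite addr_ge0 // ?sqr_ge0 // mulr_ge0 // ?sqr_ge0 // ltW.
    by rewrite pmulr_rge0.
  rewrite -hp -hq; nra.
- rewrite -hp; ring.
- rewrite -hq; ring.
Qed.
End L.

Section L2.
Variable R : realType.
Implicit Types x y z e f t u w v g h : 'cV[R]_5.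
Local Notation d0 := (d0 R).

Lemma null_case e f : 0 < lform e e ->
  lform e e * lform f f - lform e f ^+ 2 = 0 ->
  let u := f - (lform e f / lform e e) *: e in
  lform u u = 0 /\ lform u e = 0 /\ lform u f = 0.
Proof.
move=> HE HD u; have E0 : lform e e != 0 by rewrite gt_eqF.
have Hfe : lform f e = lform e f by rewrite lformC.
rewrite /u !lformE Hfe.
have Hff : lform f f = lform e f ^+ 2 / lform e e.
  have h : lform e e * lform f f = lform e f ^+ 2 by apply/eqP; rewrite -subr_eq0 HD.
  by rewrite -h; field.
rewrite Hff; split; last split; by field.
Qed.

Lemma deg_timelike e f (c : R) : 0 < lform e e -> f = c *: e ->
  exists t, lform t t < 0 /\ lform t e = 0 /\ lform t f = 0.
Proof.
move=> HE ->; have E0 : lform e e != 0 by rewrite gt_eqF.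
set t := d0 - (lform e d0 / lform e e) *: e.
have Hdd : lform d0 d0 = -1 by rewrite lform_d0 d0E.
have h : 0 <= lform e d0 ^+ 2 / lform e e by rewrite divr_ge0 ?sqr_ge0 ?ltW.
have Htt : lform t t = -1 - lform e d0 ^+ 2 / lform e e.
  by rewrite /t !lformE Hdd (lformC d0 e); field.
have Hte : lform t e = 0 by rewrite /t !lformE (lformC d0 e); field.
exists t; split; first lra.
split => //; by rewrite lformZr Hte mulr0.
Qed.

Definition no_hpt e f := ~ (exists x, hpoint x /\ on_hplane e x /\ on_hplane f x).
Definition no_ide e f := ~ (exists v, ideal v /\ on_hplane e v /\ on_hplane f v).

Lemma timelike_contra e f t : no_hpt e f -> lform t t < 0 -> lform t e = 0 -> lform t f = 0 -> False.
Proof.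
move=> Hn Ht Hte Htf; have [x [Hx [k Hk]]] := hpoint_of Ht.
by apply: Hn; exists x; rewrite Hk /on_hplane !lformE Hte Htf mulr0; rewrite -Hk.
Qed.

Lemma lorentz_plane e f : spacelike e -> spacelike f -> no_hpt e f -> no_ide e f ->
  lform e e * lform f f - lform e f ^+ 2 < 0.
Proof.
rewrite /spacelike => HE HF Hh Hi.
case: (ltrgtP (lform e e * lform f f - lform e f ^+ 2) 0) => // HD.
- have [t [Ht [Hte Htf]]] := gram_pos_timelike HE HD.
  by case: (timelike_contra Hh Ht Hte Htf).
- have [Hu [Hue Huf]] := null_case HE HD.
  set u := f - _ *: e in Hu Hue Huf.
  case: (eqVneq u 0) => Hu0.
  + have Hf : f = (lform e f / lform e e) *: e.
      by apply/eqP; rewrite -subr_eq0; apply/eqP.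
    have [t [Ht [Hte Htf]]] := deg_timelike HE Hf.
    by case: (timelike_contra Hh Ht Hte Htf).
  + have [s [_ Hs]] := ideal_of Hu Hu0.
    by case: Hi; exists (s *: u); rewrite /on_hplane !lformZl Hue Huf mulr0.
Qed.

Lemma tangent_struct g h : spacelike g -> spacelike h -> no_hpt g h ->
  (exists v, ideal v /\ on_hplane g v /\ on_hplane h v) ->
  exists w (s c0 : R), ideal w /\ s ^+ 2 = 1 /\ lform w g = 0 /\ lform w h = 0 /\ h = s *: w + c0 *: g.
Proof.
rewrite /spacelike => HE HF Hh [v [[Hvv Hv0] [Hvg Hvh]]].
have E0 : lform g g != 0 by rewrite gt_eqF.
case: (ltrgtP (lform g g * lform h h - lform g h ^+ 2) 0) => HD.
- exfalso.
  set u := h - (lform g h / lform g g) *: g.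
  have Hu : lform u u < 0.
    have -> : lform u u = (lform g g * lform h h - lform g h ^+ 2) / lform g g.
      by rewrite /u !lformE (lformC h g); field.
    by rewrite pmulr_llt0 // invr_gt0.
  have Hvu : lform v u = 0.
    by rewrite /u !lformE; move: Hvg Hvh; rewrite /on_hplane => -> ->; rewrite mulr0 subr0.
  have [_ Hz] := orth_timelike Hu Hvu.
  have v0 := Hz Hvv; rewrite v0 mxE in Hv0; lra.
- have [t [Ht [Hte Htf]]] := gram_pos_timelike HE HD.
  by case: (timelike_contra Hh Ht Hte Htf).
- have [Hu [Hue Huf]] := null_case HE HD.
  set u := h - _ *: g in Hu Hue Huf.
  case: (eqVneq u 0) => Hu0.
  + have Hf : h = (lform g h / lform g g) *: g.
      by apply/eqP; rewrite -subr_eq0; apply/eqP.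
    have [t [Ht [Hte Htf]]] := deg_timelike HE Hf.
    by case: (timelike_contra Hh Ht Hte Htf).
  + have [s [Hs2 Hs]] := ideal_of Hu Hu0.
    exists (s *: u), s, (lform g h / lform g g); split => //; split => //.
    rewrite !lformZl Hue Huf mulr0; split => //; split => //.
    rewrite scalerA -expr2 Hs2 scale1r /u subrK //.
Qed.
End L2.

Section L3.
Variable R : realType.
Implicit Types x y z e f t u w v g h : 'cV[R]_5.
Local Notation d0 := (d0 R).
Ltac side := repeat (apply/andP; split); try assumption.

Lemma outerE u v y : (u *m v^T *m LJ R) *m y = lform v y *: u.
Proof. by rewrite -!mulmxA (mulmxA v^T) lform_mx mul_mx_scalar. Qed.

Lemma boost_null e f (p q : R) : 0 < lform e e -> 0 < lform f f ->
  let w := p *: e + q *: f in lform w w = 0 -> w != 0 ->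
  exists l : R, 0 < l /\ refl e *m (refl f *m w) = l *: w.
Proof.
move=> HE HF w Hw Hw0.
have E0 : lform e e != 0 by rewrite gt_eqF.
have F0 : lform f f != 0 by rewrite gt_eqF.
have Hfe : lform f e = lform e f by rewrite lformC.
move: Hw; rewrite /w !lformE Hfe => Hw.
have q0 : q != 0.
  apply/eqP => q0; move/eqP: Hw0; apply; rewrite /w q0 scale0r addr0.
  have h : p * p * lform e e = 0 by rewrite -Hw q0; ring.
  move/eqP: h; rewrite !mulf_eq0 (negbTE E0) orbF orbb => /eqP ->.
  by rewrite scale0r.
have p0 : p != 0.
  apply/eqP => p0; move/eqP: Hw0; apply; rewrite /w p0 scale0r add0r.
  have h : q * q * lform f f = 0 by rewrite -Hw p0; ring.
  move/eqP: h; rewrite !mulf_eq0 (negbTE F0) orbF orbb => /eqP ->.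
  by rewrite scale0r.
exists (p ^+ 2 * lform e e / (q ^+ 2 * lform f f)); split.
  by apply: divr_gt0; apply: mulr_gt0; rewrite // exprn_even_gt0.
have Hff : lform f f = - (p ^+ 2 * lform e e + 2 * p * q * lform e f) / q ^+ 2.
  have h : q ^+ 2 * lform f f = - (p ^+ 2 * lform e e + 2 * p * q * lform e f) +
    (p * (p * lform e e + q * lform e f) + q * (p * lform e f + q * lform f f)) by ring.
  rewrite Hw addr0 in h; rewrite -h; field; done.
rewrite /w !reflE !lformE Hfe.
rewrite Hff in F0 *.
apply/matrixP => i j; rewrite !mxE.
field; side; by apply: contraNneq F0 => ->; rewrite oppr0 mul0r.
Qed.

Lemma proj_w e f w : 0 < lform e e ->
  lform e e * lform f f - lform e f ^+ 2 < 0 -> lform w w = 0 ->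
  let D := lform e e * lform f f - lform e f ^+ 2 in
  let p := (lform f f * lform e w - lform e f * lform f w) / D in
  let q := (lform e e * lform f w - lform e f * lform e w) / D in
  let x0 := p *: e + q *: f in
  lform x0 e = lform w e /\ lform x0 f = lform w f /\ lform x0 x0 <= 0 /\
  (lform x0 x0 = 0 -> w = x0).
Proof.
move=> HE HD Hw D p q x0.
have E0 : lform e e != 0 by rewrite gt_eqF.
have D0 : D != 0 by rewrite lt_eqF.
have Hfe : lform f e = lform e f by rewrite lformC.
have Hx0e : lform x0 e = lform w e.
  rewrite /x0 /p /q !lformE ?Hfe (lformC w e) /D; field; by rewrite -/D.
have Hx0f : lform x0 f = lform w f.
  rewrite /x0 /p /q !lformE ?Hfe (lformC w f) /D; field; by rewrite -/D.
set z := w - x0.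
have Hze : lform z e = 0 by rewrite /z lformBl Hx0e subrr.
have Hzf : lform z f = 0 by rewrite /z lformBl Hx0f subrr.
set tau := f - (lform e f / lform e e) *: e.
have Htau : lform tau tau < 0.
  have -> : lform tau tau = D / lform e e by rewrite /tau !lformE Hfe /D; field.
  by rewrite pmulr_llt0 // invr_gt0.
have Hzt : lform z tau = 0 by rewrite /tau lformBr lformZr Hze Hzf mulr0 subrr.
have [Hz1 Hz2] := orth_timelike Htau Hzt.
have Hx0z : lform x0 z = 0 by rewrite /x0 lformDl !lformZl (lformC e z) (lformC f z) Hze Hzf !mulr0 addr0.
have Hw' : w = x0 + z by rewrite /z addrC subrK.
clearbody z x0.
have HX : lform x0 x0 = - lform z z.
  move: Hw; rewrite Hw' lformDl !lformDr (lformC z x0) Hx0z => Hw.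
  lra.
split => //; split => //; split; first lra.
move=> HX0; have : lform z z = 0 by lra.
by move/Hz2 => z0; rewrite Hw' z0 addr0.
Qed.
End L3.

Section L4.
Variable R : realType.
Implicit Types x y z e f t u w v g h : 'cV[R]_5.
Local Notation d0 := (d0 R).
Ltac side := repeat (apply/andP; split); try assumption.
Ltac fld := field; side; try done.

Lemma comm3 (M A B C : 'M[R]_5) : M *m A = A *m M -> M *m B = B *m M -> M *m C = C *m M ->
  M *m (A *m B *m C) = (A *m B *m C) *m M.
Proof.
move=> HA HB HC.
rewrite (mulmxA M (A *m B) C) (mulmxA M A B) HA -(mulmxA A M B) HB (mulmxA A B M).
by rewrite -(mulmxA (A *m B) M C) HC (mulmxA (A *m B) C M).
Qed.

Lemma sq_comm (N M : 'M[R]_5) : M *m N = N *m M -> N *m N = 1%:M -> M *m M = 1%:M ->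
  (N *m M) *m (N *m M) = 1%:M.
Proof.
move=> H HN HM.
by rewrite -(mulmxA N M) (mulmxA M N M) H -(mulmxA N M M) HM mulmx1 HN.
Qed.

Lemma conj_sq (K A B : 'M[R]_5) : K *m K = 1%:M ->
  (A *m B *m K) *m (A *m B *m K) = 1%:M -> (K *m A *m B) *m (K *m A *m B) = 1%:M.
Proof.
move=> HK H2.
have E : (K *m A *m B) *m (K *m A *m B) = K *m ((A *m B *m K) *m (A *m B *m K)) *m K.
  by rewrite -[LHS]mulmx1 -HK !mulmxA.
by rewrite E H2 mulmx1 HK.
Qed.

Lemma comm2 (M A B : 'M[R]_5) : M *m A = A *m M -> M *m B = B *m M ->
  M *m (A *m B) = A *m B *m M.
Proof.
move=> HA HB.
by rewrite (mulmxA M A B) HA -(mulmxA A M B) HB (mulmxA A B M).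
Qed.

Lemma construct e f g h w x0 (p q s c0 : R) :
  0 < lform e e -> 0 < lform f f -> 0 < lform g g -> 0 < lform h h ->
  lform e e * lform f f - lform e f ^+ 2 < 0 ->
  lform w w = 0 -> lform w g = 0 -> lform w h = 0 -> h = s *: w + c0 *: g -> s ^+ 2 = 1 ->
  x0 = p *: e + q *: f -> lform x0 e = lform w e -> lform x0 f = lform w f ->
  lform x0 x0 < 0 ->
  refl e *m refl f *m w != w ->
  linked (refl e *m refl f) (refl g *m refl h).
Proof.
move=> HE HF HG HH HD Hww Hwg Hwh Hh Hs2 Hx0 Hx0e Hx0f HX Aw.
have E0 : lform e e != 0 by rewrite gt_eqF.
have F0 : lform f f != 0 by rewrite gt_eqF.
have G0 : lform g g != 0 by rewrite gt_eqF.
have H0 : lform h h != 0 by rewrite gt_eqF.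
set X := lform x0 x0 in HX.
have X0 : X != 0 by rewrite lt_eqF.
have Hxw : lform x0 w = X.
  have e1 := Hx0e; have f1 := Hx0f.
  rewrite Hx0 !lformE (lformC f e) in e1 f1.
  rewrite /X Hx0 !lformE (lformC f e) (lformC e w) (lformC f w) -e1 -f1; ring.
have Hwx : lform w x0 = X by rewrite lformC.
pose Pi := X^-1 *: (x0 *m w^T *m LJ R + w *m x0^T *m LJ R - w *m w^T *m LJ R).
pose b := 2%:R *: Pi - 1%:M.
have bE : forall y, b *m y =
    (2 * lform w y / X) *: x0 + (2 * (lform x0 y - lform w y) / X) *: w - y.
  move=> y; rewrite /b /Pi mulmxBl mul1mx -!scalemxAl mulmxBl mulmxDl !outerE.
  apply/matrixP => i j; rewrite !mxE; fld.
clearbody b.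
have b_fp : fpres b.
  apply: fpresP => y1 z1; rewrite !bE !lformE Hxw Hwx Hww.
  rewrite -/X (lformC y1 x0) (lformC y1 w); fld.
have b_sq : b *m b = 1%:M.
  apply: mx_ext => y; rewrite mul1mx -mulmxA bE bE !lformE Hxw Hwx Hww.
  rewrite -/X ?(lformC y x0) ?(lformC y w).
  apply/matrixP => i j; rewrite !mxE; fld.
have b_x0 : b *m x0 = x0.
  rewrite bE ?Hwx ?Hxw -/X; apply/matrixP => i j; rewrite !mxE; fld.
have b_w : b *m w = w.
  rewrite bE ?Hww ?Hxw -/X; apply/matrixP => i j; rewrite !mxE; fld.
have b_iso : Defs.isometry b.
  by split => //; apply: (fix_timelike_pos b_fp b_x0).
have HD0 : lform e e * lform f f - lform e f ^+ 2 != 0 by rewrite lt_eqF.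
have Hfe : lform f e = lform e f by rewrite lformC.
pose f' := lform x0 f *: e + (- lform x0 e) *: f.
have Hf'f' : lform f' f' = (lform e e * lform f f - lform e f ^+ 2) * X.
  rewrite /f' /X Hx0 !lformE Hfe; ring.
have f'pos : 0 < lform f' f' by rewrite Hf'f'; nra.
have f'0 : lform f' f' != 0 by rewrite gt_eqF.
have X0' := X0; rewrite /X Hx0 !lformE Hfe in X0'.
have f'0' := f'0; rewrite /f' Hx0 !lformE Hfe in f'0'.
have b_f' : b *m f' = - f'.
  have h1 : lform w f' = 0.
    by rewrite /f' !lformE -Hx0e -Hx0f; ring.
  have h2 : lform x0 f' = 0 by rewrite /f' !lformE; ring.
  by rewrite bE h1 h2 subrr !mulr0 !mul0r !scale0r !add0r.
pose al := - lform g x0 / X.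
pose g' := g + al *: w.
have Hg'g' : lform g' g' = lform g g.
  by rewrite /g' !lformE Hww (lformC g w) Hwg; ring.
have g'0 : lform g' g' != 0 by rewrite Hg'g'.
have b_g' : b *m g' = - g'.
  have h1 : lform w g' = 0 by rewrite /g' !lformE Hwg Hww; ring.
  have h2 : lform x0 g' = 0 by rewrite /g' !lformE Hxw /al (lformC g x0); fld.
  by rewrite bE h1 h2 subrr !mulr0 !mul0r !scale0r !add0r.
pose b1 := refl f' *m b.
have b1_fp : fpres b1 by apply: fpres_mul => //; apply: refl_fpres.
have b1_f' : b1 *m f' = f'.
  rewrite /b1 -mulmxA b_f' reflE lformNr; apply/matrixP => i j; rewrite !mxE; fld.
have b1_e : b1 *m e = e.
  rewrite /b1 -mulmxA bE reflE -Hx0e subrr mulr0 mul0r scale0r addr0.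
  rewrite /f' !lformE ?(lformC e x0) ?(lformC f x0) -?Hx0e -?Hx0f.
  rewrite /X Hx0 !lformE ?Hfe.
  apply/matrixP => i j; rewrite !mxE; fld.
have b1_f : b1 *m f = f.
  rewrite /b1 -mulmxA bE reflE -Hx0f subrr mulr0 mul0r scale0r addr0.
  rewrite /f' !lformE ?(lformC e x0) ?(lformC f x0) -?Hx0e -?Hx0f.
  rewrite /X Hx0 !lformE ?Hfe.
  apply/matrixP => i j; rewrite !mxE; fld.
have b1_sq : b1 *m b1 = 1%:M.
  rewrite /b1 -!mulmxA (mulmxA b) (comm_neg b_fp b_f' f'0) -mulmxA b_sq mulmx1.
  exact: refl_sq.
pose b2 := refl g' *m b.
have b2_fp : fpres b2 by apply: fpres_mul => //; apply: refl_fpres.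
have b2_g' : b2 *m g' = g'.
  rewrite /b2 -mulmxA b_g' reflE lformNr; apply/matrixP => i j; rewrite !mxE; fld.
have Hg'w : lform g' w = 0 by rewrite /g' !lformE Hww (lformC g w) Hwg; ring.
have b2_w : b2 *m w = w.
  by rewrite /b2 -mulmxA b_w reflE Hg'w mulr0 mul0r scale0r subr0.
have b2_g : b2 *m g = g.
  rewrite /b2 -mulmxA bE reflE Hwg (lformC x0 g) /g' /al !lformE Hww Hwg (lformC g w) Hwg.
  rewrite ?Hxw ?(lformC g x0) -/X.
  apply/matrixP => i j; rewrite !mxE; fld.
have b2_h : b2 *m h = h.
  by rewrite Hh mulmxDr -!scalemxAr b2_w b2_g.
have b2_sq : b2 *m b2 = 1%:M.
  rewrite /b2 -!mulmxA (mulmxA b) (comm_neg b_fp b_g' g'0) -mulmxA b_sq mulmx1.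
  exact: refl_sq.
pose N := refl e *m refl f *m refl f'.
have NN : N *m N = 1%:M by apply: three_refl.
have aN : refl e *m refl f *m b = N *m b1.
  by rewrite /N /b1 -!mulmxA (mulmxA (refl f')) refl_sq // mul1mx.
have b1N : b1 *m N = N *m b1.
  by apply: comm3; apply: comm_fix.
have aa : (refl e *m refl f *m b) *m (refl e *m refl f *m b) = 1%:M.
  by rewrite aN; apply: sq_comm.
pose k1 := 1 - al * s * c0; pose k2 := al * s.
have Hg'k : g' = k1 *: g + k2 *: h.
  apply/eqP; rewrite -subr_eq0; apply/eqP.
  have -> : g' - (k1 *: g + k2 *: h) = (al * (1 - s ^+ 2)) *: w.
    rewrite /g' /k1 /k2 Hh; apply/matrixP => i j; rewrite !mxE; ring.
  by rewrite Hs2 subrr mulr0 scale0r.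
pose N' := refl g' *m refl g *m refl h.
have NN' : N' *m N' = 1%:M.
  have h3 : lform (k1 *: g + k2 *: h) (k1 *: g + k2 *: h) != 0 by rewrite -Hg'k.
  have := three_refl G0 H0 h3; rewrite -Hg'k => M3.
  by rewrite /N'; apply: conj_sq => //; apply: refl_sq.
have cN : b *m (refl g *m refl h) = N' *m b2.
  have -> : b = refl g' *m b2 by rewrite /b2 mulmxA refl_sq // mul1mx.
  by rewrite -mulmxA (comm2 (comm_fix b2_fp b2_g G0) (comm_fix b2_fp b2_h H0)) /N' !mulmxA.
have b2N' : b2 *m N' = N' *m b2.
  by apply: comm3; apply: comm_fix.
have cc : (b *m (refl g *m refl h)) *m (b *m (refl g *m refl h)) = 1%:M.
  by rewrite cN; apply: sq_comm.
have Hgg' : lform g g' = lform g g by rewrite /g' !lformE (lformC g w) Hwg; ring.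
have Hhh : lform h h = c0 ^+ 2 * lform g g.
  by rewrite Hh !lformE Hww (lformC g w) Hwg; ring.
have c00 : c0 != 0 by apply: contraNneq H0 => c0z; rewrite Hhh c0z expr0n mul0r.
have Hhg' : lform h g' = c0 * lform g g.
  by rewrite Hh /g' !lformE Hww (lformC g w) Hwg; ring.
have Hgh : lform g h = c0 * lform g g by rewrite Hh !lformE (lformC g w) Hwg; ring.
clearbody g'.
have isoA : Defs.isometry (refl e *m refl f) by apply: isometry_mul; apply: refl_iso.
have isoB : Defs.isometry (refl g *m refl h) by apply: isometry_mul; apply: refl_iso.
exists (refl e *m refl f *m b), b, (b *m (refl g *m refl h)).
split; last split; last split; last split.
- split; first exact: isometry_mul.
  split => // Ha1.
  have HA : refl e *m refl f = b by rewrite -[LHS]mulmx1 -b_sq mulmxA Ha1 mul1mx.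
  by move/eqP: Aw; apply; rewrite HA b_w.
- split => //; split => // Hb1.
  have : f' = - f' by rewrite -b_f' Hb1 mul1mx.
  move/(congr1 (lform f')); rewrite lformNr => hf; lra.
- split; first exact: isometry_mul.
  split => // Hc1.
  have HB : refl g *m refl h = b by rewrite -[LHS]mul1mx -b_sq -mulmxA Hc1 mulmx1.
  have key : lform g (refl g *m (refl h *m g')) = lform g g.
    rewrite !reflE !lformE Hgg' Hhg' Hgh Hhh; fld.
  move: key; rewrite mulmxA HB b_g' lformNr Hgg' => key.
  lra.
- by rewrite -mulmxA b_sq mulmx1.
- by rewrite mulmxA b_sq mul1mx.
Qed.
End L4.

Unset Implicit Arguments.

Theorem theorem7p3 (R : realType) (A B : 'M[R]_5) :
  pure_hyperbolic A -> pure_parabolic B -> fix_disjoint A B -> linked A B.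
Proof.
move=> [e [f [[He [Hf [Hn1 Hn2]]] ->]]] [g [h [[Hg [Hh [Hn3 [v [Hv [Hvg [Hvh _]]]]]]] ->]]] [_ Fd].
have HD := lorentz_plane He Hf Hn1 Hn2.
have [w [s [c0 [[Hww Hw0] [Hs2 [Hwg [Hwh Hhw]]]]]]] :=
  tangent_struct Hg Hh Hn3 (ex_intro _ v (conj Hv (conj Hvg Hvh))).
have Bw : refl g *m refl h *m w = w.
  rewrite -mulmxA [refl h *m w]reflE (lformC h w) Hwh mulr0 mul0r scale0r subr0.
  by rewrite reflE (lformC g w) Hwg mulr0 mul0r scale0r subr0.
have HE : 0 < lform e e := He.
have [Hx0e [Hx0f [HX HX0]]] := proj_w HE HD Hww.
set p := (_ / _) in Hx0e Hx0f HX HX0.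
set q := (_ / _) in Hx0e Hx0f HX HX0.
case: (ltrP (lform (p *: e + q *: f) (p *: e + q *: f)) 0) => HXl.
- apply: (construct (p := p) (q := q) He Hf Hg Hh HD Hww Hwg Hwh Hhw Hs2 erefl Hx0e Hx0f HXl).
  apply/eqP => Aw; apply: Fd; exists w; split; first by [].
  split; first by exists 1; rewrite scale1r ltr01 Aw.
  by exists 1; rewrite scale1r ltr01 Bw.
- have X0 : lform (p *: e + q *: f) (p *: e + q *: f) = 0 by apply/eqP; rewrite eq_le HX.
  have Hwx := HX0 X0.
  have wn0 : (p *: e + q *: f) != 0.
    by rewrite -Hwx; apply/eqP => w0; rewrite w0 mxE in Hw0; rewrite ltxx in Hw0.
  have [l [l0 Hl]] := boost_null (p := p) (q := q) He Hf X0 wn0.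
  case: Fd; exists w; split; first by [].
  split; first by exists l; rewrite Hwx -mulmxA Hl.
  by exists 1; rewrite scale1r ltr01 Bw.
Qed.
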